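(* Let $X$ be an FK-space containing $\phi$, and let $\overline{\phi}$ denote the closure of $\phi$ in $X$. If $Y$ is an FK-space with $\overline{\phi}\subseteq Y\subseteq X$, then $D_p^qF^+(Y)=D_p^qF^+(X)$.
   Context: An FK-space is a vector subspace of the space $w$ of all complex sequences with a complete metrizable locally convex topology in which coordinate functionals are continuous; $X'$ is its continuous dual. $\delta^j$ has $1$ in position $j$, $0$ elsewhere; $\phi=\operatorname{span}\{\delta^j\}$. $p(n)<q(n)$ are nonnegative integer sequences with $q(n)\to\infty$. For an FK-space $X\supseteq\phi$, $D_p^qF^+(X)=\{x\in w:\lim_n\frac{1}{q(n)-p(n)}\sum_{k=p(n)+1}^{q(n)}\sum_{j=1}^kx_jf(\delta^j)\text{ exists }\forall f\in X'\}$. *)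

(* Defs.v *)
From HB Require Import structures.
From mathcomp Require Import all_boot all_order all_algebra.
From mathcomp Require Import all_classical all_reals all_analysis.
From mathcomp Require Export complex.
Export numFieldTopology.Exports numFieldNormedType.Exports.

Set Implicit Arguments.
Unset Strict Implicit.
Unset Printing Implicit Defensive.

Import Order.TTheory GRing.Theory Num.Theory.
Local Open Scope classical_set_scope.
Local Open Scope ring_scope.

Section FK.
Variable R : realType.
Local Notation C := (R[i] : numFieldType).

(* the unit sequence delta^j (0-based coordinates) *)
Definition delta (j : nat) : nat -> C := fun i => (i == j)%:R.

Definition phi : set (nat -> C) :=
  [set x | exists N : nat, forall j : nat, (N <= j)%N -> x j = 0].

Definition metrizable (T : topologicalType) : Prop :=
  exists d : T -> T -> R,
    [/\ (forall x y, 0 <= d x y),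
        (forall x y, d x y = 0 <-> x = y),
        (forall x y, d x y = d y x),
        (forall x y z, d x z <= d x y + d y z) &
        (forall (x : T) (A : set T),
            nbhs x A <-> exists2 e : R, 0 < e & [set y | d x y < e] `<=` A)].

Definition tvs_cauchy (V : tvsType C) (F : set_system V) : Prop :=
  forall U : set V, nbhs (0 : V) U ->
    exists A : set V, F A /\ (forall x y, A x -> A y -> U (x - y)).

Definition tvs_complete (V : tvsType C) : Prop :=
  forall F : set_system V, ProperFilter F -> tvs_cauchy F ->
    exists x : V, F --> x.

(* An FK-space is given as a complete metrizable locally convex tvs V
   (tvsType is locally convex) together with a linear injection
   iota : V -> w whose image is the space X (with transported topology),
   such that the coordinate functionals are continuous. *)
Definition is_FK (V : tvsType C) (iota : V -> (nat -> C)) : Prop :=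
  [/\ (forall (a : C) (u v : V) (j : nat),
          iota (a *: u + v) j = a * iota u j + iota v j),
      injective iota,
      (forall j : nat, continuous (fun v : V => iota v j)),
      metrizable V &
      tvs_complete V].

Definition contains_phi (V : tvsType C) (iota : V -> (nat -> C)) : Prop :=
  forall j : nat, exists v : V, iota v = delta j.

Definition in_dual (V : tvsType C) (f : V -> C) : Prop :=
  (forall (a : C) (u v : V), f (a *: u + v) = a * f u + f v) /\ continuous f.

Definition phi_closure (V : tvsType C) (iota : V -> (nat -> C)) : set V :=
  closure [set v : V | phi (iota v)].

(* Coordinates are 0-based: the paper's x_j (j >= 1) is x (j-1)
   and the paper's delta^j is delta (j-1); e j is the element of V with
   iota (e j) = delta j (unique by injectivity).  The n-th term is
   1/(q n - p n) * sum_{k = p n + 1}^{q n} sum_{j=1}^{k} x_j f(delta^j). *)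
Definition Dpq_seq (p q : nat -> nat) (x : nat -> C) (V : tvsType C)
    (f : V -> C) (e : nat -> V) : nat -> C :=
  fun n : nat =>
    ((q n - p n)%N%:R)^-1 *
    \sum_((p n).+1 <= k < (q n).+1) \sum_(j < k) x j * f (e j).

Definition DpqFplus (p q : nat -> nat) (V : tvsType C)
    (iota : V -> (nat -> C)) : set (nat -> C) :=
  [set x | forall (f : V -> C) (e : nat -> V),
      in_dual f -> (forall j, iota (e j) = delta j) ->
      cvgn (Dpq_seq p q x f e)].

End FK.

(* Main.v *)
Require Import Defs.
From HB Require Import structures.
From mathcomp Require Import all_boot all_order all_algebra.
From mathcomp Require Import all_classical all_reals all_analysis.
From mathcomp Require Import complex.
From mathcomp Require Import ring lra.
Import numFieldTopology.Exports numFieldNormedType.Exports.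
Set Implicit Arguments.
Unset Strict Implicit.
Unset Printing Implicit Defensive.
Import Order.TTheory GRing.Theory Num.Theory.
Local Open Scope classical_set_scope.
Local Open Scope ring_scope.

Local Open Scope classical_set_scope.
Local Open Scope ring_scope.

Section TvsBasics.
Variables (K : numFieldType) (E : tvsType K).

Lemma tcvgD (T : Type) (F : set_system T) (FF : Filter F) (f g : T -> E) a b :
  f @ F --> a -> g @ F --> b -> (fun x => f x + g x) @ F --> a + b.
Proof.
move=> fa gb; apply: (@continuous2_cvg _ _ _ _ _ _ _ _ (fun x y : E => x + y)) => //.
exact: (@add_continuous _ (a, b)).
Qed.

Lemma tcvgZ (T : Type) (F : set_system T) (FF : Filter F) (s : T -> K^o) (f : T -> E) (k : K^o) (a : E) :
  s @ F --> k -> f @ F --> a -> (fun x => s x *: f x) @ F --> k *: a.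
Proof.
move=> sk fa; apply: (@continuous2_cvg _ K^o _ _ _ _ _ _ (fun (x : K^o) (y : E) => x *: y)) => //.
exact: (@scale_continuous _ _ (k, a)).
Qed.

Lemma tcvgN (T : Type) (F : set_system T) (FF : Filter F) (f : T -> E) a :
  f @ F --> a -> (fun x => - f x) @ F --> - a.
Proof.
move=> fa; have H := tcvgZ (s := fun=> -1) _ (cvg_cst (-1 : K^o)) fa.
rewrite scaleN1r in H.
have -> : (fun x => - f x) = (fun x => (-1 : K^o) *: f x) by apply: funext => x; rewrite scaleN1r.
exact: H.
Qed.

Lemma tcvgB (T : Type) (F : set_system T) (FF : Filter F) (f g : T -> E) a b :
  f @ F --> a -> g @ F --> b -> (fun x => f x - g x) @ F --> a - b.
Proof. by move=> fa gb; apply: tcvgD => //; apply: tcvgN. Qed.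

Lemma nbhs_shift (x : E) (B : set E) : nbhs x B -> nbhs 0 (fun z => B (x + z)).
Proof.
move=> Bx.
have : (fun z : E => x + z) @ (nbhs (0:E)) --> x.
  have := tcvgD _ (cvg_cst x) (@cvg_id _ (nbhs (0:E))).
  by rewrite addr0 => H; apply: H; apply: nbhs_filter.
by move=> /(_ B Bx).
Qed.

Lemma nbhs_unshift (x : E) (O : set E) : nbhs 0 O -> nbhs x (fun y => O (y - x)).
Proof.
move=> O0.
have : (fun y : E => y - x) @ (nbhs x) --> (0:E).
  have := tcvgB _ (@cvg_id _ (nbhs x)) (cvg_cst x).
  by rewrite subrr => H; apply: H; apply: nbhs_filter.
by move=> /(_ O O0).
Qed.

Lemma nbhs0_half (O : set E) : nbhs 0 O ->
  exists Q : set E, [/\ nbhs 0 Q, (forall a b, Q a -> Q b -> O (a + b)) &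
     (forall a, Q a -> Q (- a))].
Proof.
move=> O0.
have := @add_continuous _ ((0:E), (0:E)) O; rewrite addr0 => /(_ O0).
move=> [[B1 B2]] /= [B10 B20] BO.
have N0 : nbhs (0:E) (B1 `&` B2) by apply: filterI.
have NN := nbhs0N N0.
exists ((B1 `&` B2) `&` (-%R @` (B1 `&` B2))); split.
- exact: filterI.
- move=> a b [[a1 a2] _] [[b1 b2] _].
  by apply: (BO (a, b)); split.
- move=> a [ab [c cb ca]]; split; first by rewrite -ca opprK.
  by exists a.
Qed.

Lemma nbhs0_scale (O : set E) (k : K) : nbhs 0 O -> nbhs 0 (fun z => O (k *: z)).
Proof.
move=> O0.
have : (fun z : E => k *: z) @ (nbhs (0:E)) --> (0:E).
  have := tcvgZ _ (cvg_cst (k : K^o)) (@cvg_id _ (nbhs (0:E))).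
  by rewrite scaler0 => H; apply: H; apply: nbhs_filter.
by move=> /(_ O O0).
Qed.

End TvsBasics.

Local Open Scope classical_set_scope.
Local Open Scope ring_scope.


Section Metr.
Variable R : realType.
Local Notation C := (R[i] : numFieldType).
Variable E : tvsType C.

Lemma metr_base : metrizable R E ->
  exists N : nat -> set E, [/\ (forall n, nbhs 0 (N n)),
     (forall n m, (n <= m)%N -> N m `<=` N n) &
     (forall U, nbhs 0 U -> exists n, N n `<=` U)].
Proof.
move=> [d [d0 dE dC dT dN]].
exists (fun n => [set y | d 0 y < n.+1%:R^-1]); split.
- move=> n; apply/dN; exists n.+1%:R^-1 => //.
- move=> n m nm y /= Hy; apply: (lt_le_trans Hy).
  by rewrite lef_pV2 ?posrE ?ltr0Sn // ler_nat ltnS.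
- move=> U /dN [e e0 eU].
  have [N _ HN] := near_infty_natSinv_lt (PosNum e0).
  exists N => y /= Hy; apply: eU => /=; apply: (lt_trans Hy).
  exact: (HN N (leqnn N)).
Qed.

Lemma closure_tvs (S : set E) (x : E) :
  closure S x <-> (forall O, nbhs 0 O -> exists s, S s /\ O (x - s)).
Proof.
split.
- move=> cx O O0.
  have N1 : nbhs (0:E) (fun z => O (- z)).
    by have := nbhs0_scale (-1) O0; apply: filterS => z; rewrite scaleN1r.
  have := nbhs_unshift x N1 => /cx [s [Ss Os]].
  by exists s; split => //; move: Os; rewrite opprB.
- move=> H B Bx.
  have := nbhs_shift Bx => Bs.
  have N1 : nbhs (0:E) (fun z => B (x + - z)).
    by have := nbhs0_scale (-1) Bs; apply: filterS => z; rewrite scaleN1r.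
  have [s [Ss Os]] := H _ N1.
  by exists s; split => //; move: Os; rewrite opprB addrC subrK.
Qed.

Lemma cvg_tvs (s : nat -> E) (x : E) :
  s @ \oo --> x -> forall O, nbhs (0:E) O -> \forall n \near \oo, O (s n - x).
Proof.
move=> sx O O0; have := nbhs_unshift x O0 => /sx.
by [].
Qed.

Lemma cauchy_seq_cvg (s : nat -> E) : tvs_complete E ->
  (forall U, nbhs (0:E) U -> exists n, forall i j, (n <= i)%N -> (n <= j)%N -> U (s i - s j)) ->
  exists x : E, s @ \oo --> x.
Proof.
move=> cpl H; apply: cpl.
move=> U /H [n Hn]; exists (s @` [set i | (n <= i)%N]); split.
  exists n => // i /= ni; by exists i.
by move=> _ _ [i ni <-] [j nj <-]; apply: Hn.
Qed.

Lemma closed_seq (A : set E) (s : nat -> E) (x : E) :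
  closed A -> (forall n, A (s n)) -> s @ \oo --> x -> A x.
Proof.
move=> cA sA sx; apply: (closed_cvg _ cA _ _ sx).
by apply: nearW.
Qed.

End Metr.

Local Open Scope classical_set_scope.
Local Open Scope ring_scope.


Lemma zid1 (E : zmodType) (a b c : E) : a - ((b - c) + (a - b)) = c.
Proof. by rewrite opprD !opprB addrA addrC addrA subrK subrKC. Qed.
Lemma zid2 (E : zmodType) (a b c : E) : a - c = (a - b) + (b - c).
Proof. by rewrite addrA subrK. Qed.

Section Baire.
Variable R : realType.
Local Notation C := (R[i] : numFieldType).
Variable E : tvsType C.

Lemma not_closed_wit (S : set E) (b : E) : closed S -> ~ S b ->
  exists P, nbhs (0:E) P /\ forall c, S c -> ~ P (b - c).
Proof.
move=> cS nb; apply: contrapT => nH; apply: nb; apply: cS.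
apply/closure_tvs => O O0; apply: contrapT => nO; apply: nH.
exists O; split => // c Sc Oc; apply: nO; by exists c.
Qed.

Lemma baire (A : set E) (Cn : nat -> set E) :
  metrizable R E -> tvs_complete E -> closed A -> A 0 ->
  (forall n, closed (Cn n)) -> (forall a, A a -> exists n, Cn n a) ->
  exists n a Q, [/\ A a, nbhs (0:E) Q & forall b, A b -> Q (b - a) -> Cn n b].
Proof.
move=> mE cE cA A0 cC cover.
have [N [N0 Ndec Nbase]] := metr_base mE.
apply: contrapT => nH.
have H : forall n a Q, A a -> nbhs (0:E) Q ->
    exists b, [/\ A b, Q (b - a) & ~ Cn n b].
  move=> n a Q Aa Q0; apply: contrapT => nb; apply: nH.
  exists n, a, Q; split => // b Ab Qb; apply: contrapT => nC; apply: nb.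
  by exists b.
pose stepP (k : nat) (st st' : E * set E) :=
  [/\ A st'.1, nbhs (0:E) st'.2,
     (exists Q : set E, [/\ Q (st'.1 - st.1),
        (forall u v, Q u -> Q v -> st.2 (u + v) /\ N k (u + v)),
        st'.2 `<=` Q & forall u, Q u -> Q (- u)]),
     (forall u, st'.2 u -> st'.2 (- u)) &
     (forall u v, st'.2 u -> st'.2 v -> ~ Cn k (st'.1 - (u + v)))].
have Hstep : forall kst : nat * (E * set E), exists st' : E * set E,
    A kst.2.1 /\ nbhs (0:E) kst.2.2 -> stepP kst.1 kst.2 st'.
  move=> [k [x O]] /=.
  have [[Ax O0]|nv] := pselect (A x /\ nbhs (0:E) O); last first.
    by exists (0, setT) => hv; exfalso; apply: nv.
  have [Q [Q0 QO Qs]] := nbhs0_half (filterI O0 (N0 k)).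
  have [b [Ab Qb nCb]] := H k x Q Ax Q0.
  have [P [P0 Pw]] := not_closed_wit (cC k) nCb.
  have [Op [Op0 OpPQ Ops]] := nbhs0_half (filterI P0 Q0).
  exists (b, Op) => _; split => //=.
  - exists Q; split => //.
    move=> u Opu; have [_] : (P `&` Q) (u + 0).
      by apply: OpPQ => //; exact: nbhs_singleton.
    by rewrite addr0.
  - move=> u v Opu Opv Cc; have [Puv _] := OpPQ _ _ Opu Opv.
    by apply: (Pw _ Cc); rewrite opprB addrC subrK.
have [step Hs] := choice Hstep.
pose st := fix f (n : nat) : E * set E :=
  match n with 0 => (0, setT) | k.+1 => step (k, f k) end.
have valid : forall k, A (st k).1 /\ nbhs (0:E) (st k).2.
  elim => [|k [IH1 IH2]] /=; first by split => //; exact: filterT.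
  by have [] := Hs (k, st k) (conj IH1 IH2).
have Fk : forall k, stepP k (st k) (st k.+1).
  by move=> k; exact: (Hs (k, st k) (valid k)).
pose x k := (st k).1.
pose O k := (st k).2.
have chain : forall len i, (O i `&` N i) (x (i + len)%N - x i) /\
                           (O i `&` N i) (x i - x (i + len)%N).
  elim => [|len IH] i.
    rewrite addn0 subrr; have [_ Oi] := valid i.
    by split; split; apply: nbhs_singleton => //; exact: N0.
  have [_ _ [Q [Qx QQ OQ Qs]] _ _] := Fk i.
  have [[IH1 _] [IH2 _]] := IH i.+1.
  rewrite -addSnnS.
  split.
  - rewrite (zid2 _ (x i.+1)) addrC.
    by have [] := QQ _ _ (Qx) (OQ _ IH1); split.
  - rewrite (zid2 _ (x i.+1)).
    have Qx' : Q (x i - x i.+1) by rewrite -opprB; apply: Qs.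
    by have [] := QQ _ _ Qx' (OQ _ IH2); split.
have [xl xlim] : exists xl : E, x @ \oo --> xl.
  apply: cauchy_seq_cvg => // U U0.
  have [U' [U'0 U'U U's]] := nbhs0_half U0.
  have [n Nn] := Nbase _ U'0.
  exists n => i j ni nj.
  rewrite (zid2 _ (x n)); apply: U'U; apply: Nn.
  - by have := (chain (i - n)%N n).1; rewrite subnKC // => -[].
  - by have := (chain (j - n)%N n).2; rewrite subnKC // => -[].
have Axl : A xl := closed_seq cA (fun k => (valid k).1) xlim.
have [k Ck] := cover _ Axl.
have [_ _ _ _ Hnc] := Fk k.
have [M _ HM] := cvg_tvs xlim (valid k.+1).2.
pose m := maxn M k.+1.
apply: (Hnc (x m - xl) (x k.+1 - x m)).
- exact: (HM m (leq_maxl _ _)).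
- by have := (chain (m - k.+1)%N k.+1).2; rewrite subnKC ?leq_maxr // => -[].
- by rewrite /= zid1.
Qed.

End Baire.

Local Open Scope classical_set_scope.
Local Open Scope ring_scope.

Section CG.
Variable R : realType.
Local Notation C := (R[i] : numFieldType).

Lemma inv_small (P : set C) : nbhs (0:C) P -> exists n : nat, P (n.+1%:R^-1).
Proof.
move=> /nbhs_ballP [e e0 He].
rewrite /= in e0.
have Ie : complex.Im e = 0 by apply: ger0_Im; exact: ltW.
have e0' : 0 < complex.Re e by move: e0; rewrite ltcE /= Ie eqxx.
have [N _ HN] := near_infty_natSinv_lt (PosNum e0').
exists N; apply: He.
rewrite /ball /= sub0r normrN normfV normr_nat.
have -> : e = real_complex R (complex.Re e) by rewrite [LHS]complexE Ie mulr0 addr0.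
have -> : (N.+1%:R : C) = real_complex R (N.+1%:R : R) by rewrite rmorph_nat.
rewrite -fmorphV ltcR; exact: (HN N (leqnn N)).
Qed.

Lemma zid3 (E : zmodType) (x y s1 s2 : E) : (x + y - s1) + - (y - s2) = x - (s1 - s2).
Proof.
rewrite !opprB -!addrA; congr (x + _).
by rewrite addrC -addrA addrC subrK.
Qed.

Section Lin.
Variables (E F : tvsType C) (A : set E) (T : E -> F).
Hypothesis A0 : A 0.
Hypothesis Alin : forall a x y, A x -> A y -> A (a *: x + y).
Hypothesis Tlin : forall a x y, A x -> A y -> T (a *: x + y) = a *: T x + T y.

Lemma AB x y : A x -> A y -> A (x - y).
Proof. by move=> Ax Ay; have := Alin (-1) Ay Ax; rewrite scaleN1r addrC. Qed.
Lemma AD x y : A x -> A y -> A (x + y).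
Proof. by move=> Ax Ay; have := Alin 1 Ax Ay; rewrite scale1r. Qed.
Lemma AZ c x : A x -> A (c *: x).
Proof. by move=> Ax; have := Alin c Ax A0; rewrite addr0. Qed.
Lemma T0 : T 0 = 0.
Proof.
have := Tlin 1 A0 A0; rewrite !scale1r addr0 => h.
by apply: (addrI (T 0)); rewrite addr0 -h.
Qed.
Lemma TB x y : A x -> A y -> T (x - y) = T x - T y.
Proof. by move=> Ax Ay; have := Tlin (-1) Ay Ax; rewrite !scaleN1r addrC [_ + T x]addrC. Qed.
Lemma TD x y : A x -> A y -> T (x + y) = T x + T y.
Proof. by move=> Ax Ay; have := Tlin 1 Ax Ay; rewrite !scale1r. Qed.
Lemma TZ c x : A x -> T (c *: x) = c *: T x.
Proof. by move=> Ax; have := Tlin c Ax A0; rewrite !addr0 T0 addr0. Qed.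
End Lin.

Lemma scale_small (F : tvsType C) (U : set F) (v : F) : nbhs (0:F) U ->
  exists n : nat, U (n.+1%:R^-1 *: v).
Proof.
move=> U0.
have : (fun c : C^o => c *: v) @ nbhs (0 : C^o) --> (0:F).
  have := tcvgZ _ (@cvg_id _ (nbhs (0 : C^o))) (cvg_cst v).
  by rewrite scale0r => H; apply: H; apply: nbhs_filter.
move=> /(_ U U0) /inv_small [n Hn]; by exists n.
Qed.

Lemma almost_cont (E F : tvsType C) (A : set E) (T : E -> F) :
  metrizable R E -> tvs_complete E -> closed A -> A 0 ->
  (forall a x y, A x -> A y -> A (a *: x + y)) ->
  (forall a x y, A x -> A y -> T (a *: x + y) = a *: T x + T y) ->
  forall U, nbhs (0:F) U -> exists N : set E, nbhs (0:E) N /\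
    forall w, A w -> N w -> closure [set a | A a /\ U (T a)] w.
Proof.
move=> mE cE cA A0 Alin Tlin U U0.
have [Uh [Uh0 UhU Uhs]] := nbhs0_half U0.
pose Cn (n : nat) := closure [set a | A a /\ Uh (n.+1%:R^-1 *: T a)].
have [||n [a0 [Q [Aa0 Q0 HQ]]]] := @baire R E A Cn mE cE cA A0.
- by move=> n; exact: closed_closure.
- move=> a Aa; have [n Hn] := scale_small (T a) Uh0.
  by exists n; apply: subset_closure.
pose c : C := n.+1%:R.
have c0 : c != 0 by rewrite /c pnatr_eq0.
exists (fun w => Q (c *: w)); split; first exact: nbhs0_scale.
move=> w Aw Qw; apply/closure_tvs => O O0.
have W10 : nbhs (0:E) (fun z => O (c^-1 *: z)) by exact: nbhs0_scale.
have [Wd [Wd0 WdW1 Wds]] := nbhs0_half W10.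
pose b := c *: w + a0.
have Ab : A b by apply: Alin.
have Cb : Cn n b by apply: HQ => //; rewrite /b addrK.
have Ca0 : Cn n a0 by apply: HQ => //; rewrite subrr; exact: nbhs_singleton.
have [s1 [[As1 Us1] Os1]] := (iffLR (closure_tvs _ _) Cb) _ Wd0.
have [s2 [[As2 Us2] Os2]] := (iffLR (closure_tvs _ _) Ca0) _ Wd0.
exists (c^-1 *: (s1 - s2)); split; first split.
- by apply: (AZ A0 Alin); apply: (AB Alin).
- have As12 := AB Alin As1 As2.
  rewrite (TZ A0 Tlin _ As12) (TB Tlin As1 As2) scalerBr.
  by apply: UhU => //; apply: Uhs.
- have := WdW1 _ _ Os1 (Wds _ Os2).
  rewrite /b zid3 scalerBr scalerA mulVf // scale1r.
  by [].
Qed.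

End CG.

Local Open Scope classical_set_scope.
Local Open Scope ring_scope.

Section CG2.
Variable R : realType.
Local Notation C := (R[i] : numFieldType).

Lemma seq_cvg_tvs (E : tvsType C) (s : nat -> E) (x : E) :
  (forall O, nbhs (0:E) O -> \forall n \near \oo, O (s n - x)) -> s @ \oo --> x.
Proof.
move=> H B Bx; have := H _ (nbhs_shift Bx).
by apply: filterS => n /=; rewrite addrC subrK.
Qed.

Lemma closed_graph (E F : tvsType C) (A : set E) (T : E -> F) :
  metrizable R E -> tvs_complete E -> metrizable R F -> tvs_complete F ->
  closed A -> A 0 ->
  (forall a x y, A x -> A y -> A (a *: x + y)) ->
  (forall a x y, A x -> A y -> T (a *: x + y) = a *: T x + T y) ->
  (forall (s : nat -> E) x y, (forall n, A (s n)) -> A x -> s @ \oo --> x ->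
      (fun n => T (s n)) @ \oo --> y -> T x = y) ->
  forall U, nbhs (0:F) U -> exists N : set E, nbhs (0:E) N /\
    forall a, A a -> N a -> U (T a).
Proof.
move=> mE cE mF cF cA A0 Alin Tlin Tcl U U0.
have [NE [NE0 NEdec NEbase]] := metr_base mE.
have [NF [NF0 NFdec NFbase]] := metr_base mF.
have hh : forall O : set F, exists Q : set F, nbhs (0:F) O ->
    [/\ nbhs (0:F) Q, (forall a b, Q a -> Q b -> O (a + b)) & (forall a, Q a -> Q (- a))].
  move=> O; have [Oz|nO] := pselect (nbhs (0:F) O); last first.
    by exists setT => /nO.
  have [Q [Q0 QO Qs]] := nbhs0_half Oz; by exists Q.
have [h Hh] := choice hh.
have [Wz W1U _] := Hh U U0.
pose Uk := fix f (k : nat) : set F :=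
  match k with 0 => h (h U) | k.+1 => h (f k `&` NF k) end.
have Uok : forall k, nbhs (0:F) (Uk k).
  elim => [|k IH] /=; first by have [] := Hh _ Wz.
  by have [] := Hh _ (filterI IH (NF0 k)).
have UU : forall k a b, Uk k.+1 a -> Uk k.+1 b -> (Uk k `&` NF k) (a + b).
  by move=> k a b; have [_ + _] := Hh _ (filterI (Uok k) (NF0 k)); apply.
have Us : forall k a, Uk k a -> Uk k (- a).
  case => [|k] a /=; first by have [_ _] := Hh _ Wz; apply.
  by have [_ _] := Hh _ (filterI (Uok k) (NF0 k)); apply.
have U0W : forall a b, Uk 0 a -> Uk 0 b -> h U (a + b).
  by have [_ + _] := Hh _ Wz.
have [Nk HNk] := choice (fun k => almost_cont mE cE cA A0 Alin Tlin (Uok k)).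
exists (Nk 0); split; first by have [] := HNk 0.
move=> a Aa Na.
have hx : forall kr : nat * E, exists x : E, A kr.2 /\ Nk kr.1 kr.2 ->
    [/\ A x, Uk kr.1 (T x), Nk kr.1.+1 (kr.2 - x) & NE kr.1.+1 (kr.2 - x)].
  move=> [k r] /=; have [[Ar Nr]|nv] := pselect (A r /\ Nk k r); last first.
    by exists 0 => /nv.
  have [N0 HN] := HNk k.
  have [Nk1 _] := HNk k.+1.
  have := (iffLR (closure_tvs _ _) (HN r Ar Nr)) _ (filterI Nk1 (NE0 k.+1)).
  by move=> [x [[Ax Ux] [N1 N2]]]; exists x.
have [xs Hx] := choice hx.
pose r := fix f (k : nat) : E := match k with 0 => a | k.+1 => f k - xs (k, f k) end.
have valid : forall k, A (r k) /\ Nk k (r k).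
  elim => [|k [IH1 IH2]] //=.
  have [Ax _ Nx _] := Hx (k, r k) (conj IH1 IH2).
  by split => //; exact: AB.
pose X k := xs (k, r k).
have HX : forall k, [/\ A (X k), Uk k (T (X k)), Nk k.+1 (r k.+1) & NE k.+1 (r k.+1)].
  by move=> k; exact: (Hx (k, r k) (valid k)).
pose s k := a - r k.
have As : forall k, A (s k) by move=> k; apply: (AB Alin) => //; exact: (valid k).1.
pose t k := T (s k).
have tstep : forall k, t k.+1 = t k + T (X k).
  move=> k; have [AX _ _ _] := HX k.
  rewrite /t -(TD Tlin (As k) AX); congr T.
  by rewrite /s /= -/(X k) opprB addrA addrAC.
have chain : forall len i, (Uk i `&` NF i) (t (i.+1 + len)%N - t i.+1) /\
                           (Uk i `&` NF i) (t i.+1 - t (i.+1 + len)%N).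
  elim => [|len IH] i.
    rewrite addn0 subrr.
    by split; split; apply: nbhs_singleton => //; exact: NF0.
  have [[IH1 _] [IH2 _]] := IH i.+1.
  have [_ UX _ _] := HX i.+1.
  rewrite -addSnnS.
  have d : t i.+2 - t i.+1 = T (X i.+1) by rewrite tstep addrAC subrr add0r.
  split.
  - by rewrite (zid2 _ (t i.+2)) addrC d; apply: UU.
  - rewrite (zid2 _ (t i.+2)) -opprB d.
    by apply: UU => //; apply: Us.
have [y ylim] : exists y : F, t @ \oo --> y.
  apply: cauchy_seq_cvg => // V V0.
  have [Vh [Vh0 VhV Vhs]] := nbhs0_half V0.
  have [n Nn] := NFbase _ Vh0.
  exists n.+1 => i j ni nj.
  rewrite (zid2 _ (t n.+1)); apply: VhV; apply: Nn.
  - by have := (chain (i - n.+1)%N n).1; rewrite subnKC // => -[].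
  - by have := (chain (j - n.+1)%N n).2; rewrite subnKC // => -[].
have slim : s @ \oo --> a.
  apply: seq_cvg_tvs => O O0.
  have Oneg : nbhs (0:E) (fun z => O (- z)).
    by have := nbhs0_scale (-1) O0; apply: filterS => z; rewrite scaleN1r.
  have [m Nm] := NEbase _ Oneg.
  exists m.+1 => // -[//|k] /= mk.
  have [_ _ _ Nr] := HX k.
  have := Nm _ (NEdec _ _ (ltnW mk) _ Nr).
  by rewrite /s addrAC subrr add0r.
have Tay : T a = y := Tcl s a y As Aa slim ylim.
rewrite Tay.
have t1 : t 1 = T (X 0) by rewrite tstep {1}/t /s /= subrr (T0 A0 Tlin) add0r.
have [_ UX0 _ _] := HX 0.
have [M _ HM] := cvg_tvs ylim (Uok 0).
pose m := maxn M 1.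
have e1 : Uk 0 (y - t m) by rewrite -opprB; apply: Us; apply: HM; exact: leq_maxl.
have e2 : Uk 0 (t m - t 1).
  by have := (chain (m - 1)%N 0).1; rewrite subnKC ?leq_maxr // => -[].
have w1 : h U (y - t 1) by rewrite (zid2 _ (t m)); apply: U0W.
have w0 : h U (t 1).
  rewrite -[t 1]addr0; apply: U0W; first by rewrite t1.
  exact: nbhs_singleton (Uok 0).
by rewrite -(subrKC (t 1) y); apply: W1U.
Qed.
End CG2.

Local Open Scope classical_set_scope.
Local Open Scope ring_scope.

Section HB.
Variable R : realType.
Local Notation C := (R[i] : numFieldType).
Local Notation rc := (real_complex R).

Lemma convU (V : tvsType C) (b : set V) (x y : V) (l : R) :
  convex_set (b : set (convex_lmodType V)) -> b x -> b y -> 0 <= l -> l <= 1 ->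
  b (rc l *: x + rc (1 - l) *: y).
Proof.
move=> cb bx bY l0 l1.
have l0' : 0 <= rc l :> C by rewrite ler0c.
have l1' : rc l <= 1 :> C by rewrite -(rmorph1 rc) lecR.
have := cb x y (Itv01 l0' l1') (mem_set bx) (mem_set bY).
rewrite inE /=. rewrite rmorphB rmorph1.
by [].
Qed.

Lemma good_nbhd (V : tvsType C) (Q : set V) : nbhs (0:V) Q ->
  exists U : set V, [/\ nbhs (0:V) U, U `<=` Q,
    (forall x y l, U x -> U y -> 0 <= l -> l <= 1 -> U (rc l *: x + rc (1 - l) *: y)) &
    (forall (c : C) x, `|c| = 1 -> U x -> U (c *: x))].
Proof.
move=> Q0.
have [B Bc [Bo Bb]] := @locally_convex C V.
have [b [Bb0 b0] bQ] := Bb 0 Q Q0.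
have cb : convex_set (b : set (convex_lmodType V)) by apply: Bc; exact: mem_set.
have nb : nbhs (0:V) b by apply: open_nbhs_nbhs; split => //; exact: Bo.
exists [set x | forall c : C, `|c| = 1 -> b (c *: x)]; split.
- have := @scale_continuous C V ((0 : C^o), (0:V)) b; rewrite scaler0 => /(_ nb).
  move=> [[B1 B2]] /= [B10 B20] BO.
  move: B10 => /nbhs_ballP [e /= e0 He].
  pose k : C := e / 2.
  have k0 : 0 < k by rewrite /k divr_gt0.
  have kn0 : k != 0 by rewrite gt_eqF.
  apply: (filterS (P := fun x => B2 (k^-1 *: x))); last exact: nbhs0_scale.
  move=> x Bx c c1.
  have -> : c *: x = (c * k) *: (k^-1 *: x) by rewrite scalerA -mulrA divff ?mulr1.
  apply: (BO (c * k : C^o, k^-1 *: x)); split => //=.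
  apply: He; rewrite /ball /= sub0r normrN normrM c1 mul1r gtr0_norm //.
  by rewrite /k ltr_pdivrMr // ltr_pMr // ltr1n.
- move=> x /(_ 1 (normr1 _)); rewrite scale1r; exact: bQ.
- move=> x y l Ux Uy l0 l1 c c1.
  rewrite scalerDr !scalerA ![c * rc _]mulrC -!scalerA.
  by apply: convU => //; [apply: Ux|apply: Uy].
- move=> c x c1 Ux c' c'1; rewrite scalerA; apply: Ux.
  by rewrite normrM c1 c'1 mulr1.
Qed.
End HB.

Local Open Scope classical_set_scope.
Local Open Scope ring_scope.

Section RHB.
Variable R : realType.
Local Notation C := (R[i] : numFieldType).
Local Notation rc := (real_complex R).

Lemma sc1 (V : tvsType C) (s t sg : R) (d z : V) : s != 0 -> t != 0 ->
  rc (s / t)^-1 *: (rc t^-1 *: d + rc sg *: z) = rc s^-1 *: (d + rc (t * sg) *: z).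
Proof.
move=> s0 t0; rewrite !scalerDr !scalerA -!rmorphM.
congr (rc _ *: _ + rc _ *: _); field; by rewrite s0 t0.
Qed.

Lemma real_hb (V : tvsType C) (U M : set V) (u : V -> R) :
  (forall x y l, U x -> U y -> 0 <= l -> l <= 1 -> U (rc l *: x + rc (1 - l) *: y)) ->
  (forall x, exists t, 0 < t /\ U (rc t^-1 *: x)) ->
  M 0 ->
  (forall r x y, M x -> M y -> M (rc r *: x + y)) ->
  (forall r x y, M x -> M y -> u (rc r *: x + y) = r * u x + u y) ->
  (forall m t, M m -> 0 < t -> U (rc t^-1 *: m) -> u m <= t) ->
  exists F : V -> R, [/\ (forall r x y, F (rc r *: x + y) = r * F x + F y),
     (forall m, M m -> F m = u m) &
     (forall x t, 0 < t -> U (rc t^-1 *: x) -> F x <= t)].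
Proof.
move=> Uc Uabs M0 Mlin ulin udom.
pose Good (G : set (V * R)) := [/\
  (forall v a b, G (v, a) -> G (v, b) -> a = b),
  (forall r v w a b, G (v, a) -> G (w, b) -> G (rc r *: v + w, r * a + b)),
  (forall m, M m -> G (m, u m)) &
  (forall v a t, G (v, a) -> 0 < t -> U (rc t^-1 *: v) -> a <= t)].
pose P (G : set (V * R)) := G = set0 \/ Good G.
have Pch : forall F : set (set (V * R)), F `<=` P -> total_on F subset ->
    P (\bigcup_(X in F) X).
  move=> Fm FP Ftot.
  have gm : forall G, Fm G -> G !=set0 -> Good G.
    move=> G FG [p Gp]; case: (FP G FG) => // G0; by rewrite G0 in Gp.
  have [[G0 [FG0 ne0]]|nne] := pselect (exists G, Fm G /\ G !=set0); last first.
    left; apply/seteqP; split => // p [G FG Gp]; exfalso; apply: nne.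
    by exists G; split => //; exists p.
  right.
  have two : forall p q, (\bigcup_(X in Fm) X) p -> (\bigcup_(X in Fm) X) q ->
      exists G, [/\ Fm G, Good G, G p & G q].
    move=> p q [G1 FG1 G1p] [G2 FG2 G2q].
    have [G12|G21] := Ftot _ _ FG1 FG2.
    - exists G2; split => //; last exact: G12.
      by apply: gm => //; exists q.
    - exists G1; split => //; last exact: G21.
      by apply: gm => //; exists p.
  have [_ _ G0ext _] := gm _ FG0 ne0.
  split.
  - move=> v a b pa pb; have [G [_ [Gf _ _ _] Ga Gb]] := two _ _ pa pb.
    exact: (Gf v).
  - move=> r v w a b pa pb; have [G [FG [_ Gl _ _] Ga Gb]] := two _ _ pa pb.
    by exists G => //; apply: Gl.
  - by move=> m Mm; exists G0 => //; apply: G0ext.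
  - move=> v a t [G FG Ga]; have [_ _ _ Gd] := gm _ FG (ex_intro _ _ Ga).
    exact: Gd.
have [A [PA Amax]] := Zorn_bigcup Pch.
pose GM := [set p : V * R | M p.1 /\ p.2 = u p.1].
have GoodGM : Good GM.
  split.
  - by move=> v a b [_ /= ->] [_ /= ->].
  - move=> r v w a b [Mv /= ->] [Mw /= ->]; split => /=; first exact: Mlin.
    by rewrite ulin.
  - by move=> m Mm; split.
  - by move=> v a t [Mv /= ->] t0 Uv; exact: udom.
have GoodA : Good A.
  case: PA => // A0e; exfalso; apply: (Amax GM); last by right.
  rewrite A0e; split; first exact: sub0set.
  by move=> /(_ (0, u 0)); apply; split.
have [Afun Alin Aext Adom] := GoodA.
have A00 : A (0, 0).
  have := Alin (-1) _ _ _ _ (Aext _ M0) (Aext _ M0).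
  by rewrite rmorphN rmorph1 scaleN1r addNr mulN1r addNr.
have Ascale : forall r d a, A (d, a) -> A (rc r *: d, r * a).
  by move=> r d a Ada; have := Alin r _ _ _ _ Ada A00; rewrite !addr0.
have Aadd : forall d d' a a', A (d, a) -> A (d', a') -> A (d + d', a + a').
  by move=> d d' a a' H1 H2; have := Alin 1 _ _ _ _ H1 H2; rewrite rmorph1 scale1r mul1r.
have Atot : forall z, exists a, A (z, a).
  move=> z; apply: contrapT => nz.
  have nz' : forall a, ~ A (z, a) by move=> a Aa; apply: nz; exists a.
  pose S := [set x : R | exists d a s, [/\ A (d, a), 0 < s, U (rc s^-1 *: (d - z)) & x = a - s]].
  have key : forall x d' a' s', S x -> A (d', a') -> 0 < s' ->
      U (rc s'^-1 *: (d' + z)) -> x <= s' - a'.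
    move=> x d' a' s' [d [a [s [Ada s0 Us ->]]]] Ada' s'0 Us'.
    have ss0 : 0 < s + s' := addr_gt0 s0 s'0.
    suff : a + a' <= s + s' by lra.
    apply: (Adom (d + d') (a + a') (s + s') (Aadd _ _ _ _ Ada Ada') ss0).
    pose l := s / (s + s').
    have l0 : 0 <= l by rewrite /l divr_ge0 // ltW.
    have l1 : l <= 1 by rewrite /l ler_pdivrMr // mul1r lerDl ltW.
    have := Uc _ _ l Us Us' l0 l1.
    rewrite !scalerA -!rmorphM.
    have -> : l * s^-1 = (s + s')^-1 by rewrite /l; field; rewrite gt_eqF // gt_eqF.
    have -> : (1 - l) * s'^-1 = (s + s')^-1.
      by rewrite /l; field; rewrite gt_eqF // gt_eqF.
    by rewrite -scalerDr addrA addrAC subrK.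
  have [s1 [s10 Us1]] := Uabs (0 - z).
  have [s2 [s20 Us2]] := Uabs (0 + z).
  have Sne : S !=set0 by exists (0 - s1), 0, 0, s1.
  have Sub : has_ubound S.
    by exists (s2 - 0) => x Sx; apply: (key x 0 0 s2).
  pose c := sup S.
  have cge : forall x, S x -> x <= c := ub_le_sup Sub.
  have cle : forall d' a' s', A (d', a') -> 0 < s' ->
      U (rc s'^-1 *: (d' + z)) -> c <= s' - a'.
    move=> d' a' s' H1 H2 H3; apply: ge_sup => // x Sx; exact: (key x d' a' s').
  pose B := [set p : V * R | exists d a t, A (d, a) /\ p = (d + rc t *: z, a + t * c)].
  have AB : A `<=` B.
    move=> [v a] Ava; exists v, a, 0; split => //.
    by rewrite rmorph0 scale0r addr0 mul0r addr0.
  have Bz : B (z, c).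
    by exists 0, 0, 1; split => //; rewrite rmorph1 scale1r add0r mul1r add0r.
  have GoodB : Good B.
    split.
    - move=> v b1 b2 [d1 [a1 [t1 [A1 [e1 ->]]]]] [d2 [a2 [t2 [A2 [e2 ->]]]]].
      have [t12|t12] := eqVneq t1 t2.
        subst t2.
        have d12 : d1 = d2 by apply: (addIr (rc t1 *: z)); rewrite -e1 -e2.
        by subst d2; rewrite (Afun _ _ _ A1 A2).
      exfalso.
      have h1 : rc t1 *: z = v - d1 by rewrite e1 addrAC subrr add0r.
      have h2 : rc t2 *: z = v - d2 by rewrite e2 addrAC subrr add0r.
      have dz : rc (t1 - t2) *: z = d2 - d1.
        by rewrite rmorphB scalerBl h1 h2 opprB addrC addrA subrK.
      have A21 : A (d2 - d1, a2 - a1).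
        have := Alin (-1) _ _ _ _ A1 A2.
        by rewrite rmorphN1 scaleN1r mulN1r addrC [- a1 + _]addrC.
      have := Ascale ((t1 - t2)^-1) _ _ A21.
      rewrite -dz scalerA -rmorphM mulVf ?subr_eq0 // rmorph1 scale1r.
      exact: nz'.
    - move=> r v w b1 b2 [d1 [a1 [t1 [A1 [-> ->]]]]] [d2 [a2 [t2 [A2 [-> ->]]]]].
      exists (rc r *: d1 + d2), (r * a1 + a2), (r * t1 + t2); split; first exact: Alin.
      congr pair; last by ring.
      rewrite rmorphD rmorphM scalerDl scalerDr -scalerA.
      by rewrite addrACA.
    - by move=> m Mm; apply: AB; exact: Aext.
    - move=> v b s [d [a [t [Ada [-> ->]]]]] s0 Us.
      have sn0 : s != 0 by rewrite gt_eqF.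
      have [tneg|tpos|t0] := ltgtP t 0.
      + pose w := - t.
        have w0 : 0 < w by rewrite /w oppr_gt0.
        have wn0 : w != 0 by rewrite gt_eqF.
        have Sx : S (w^-1 * a - s / w).
          exists (rc w^-1 *: d), (w^-1 * a), (s / w); split => //.
          - exact: Ascale.
          - exact: divr_gt0.
          - have -> : rc w^-1 *: d - z = rc w^-1 *: d + rc (-1) *: z.
              by rewrite rmorphN1 scaleN1r.
            rewrite sc1 //.
            have -> : w * -1 = t by rewrite /w mulrN1 opprK.
            exact: Us.
        have H := cge _ Sx.
        rewrite -(ler_pM2l w0) in H.
        have : w * (w^-1 * a - s / w) = a - s by field.
        move: H; set q := w * (w^-1 * a - s / w) => H Hq.
        have : a - s <= w * c by rewrite -Hq.
        rewrite /w; lra.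
      + have := cle (rc t^-1 *: d) (t^-1 * a) (s / t) (Ascale _ _ _ Ada) (divr_gt0 s0 tpos).
        have tn0 : t != 0 by rewrite gt_eqF.
        rewrite -[X in _ + X]scale1r -(rmorph1 rc) sc1 // mulr1 => /(_ Us) H.
        rewrite -(ler_pM2l tpos) in H.
        have : t * (s / t - t^-1 * a) = s - a by field.
        move: H; set q := t * (s / t - t^-1 * a) => H Hq.
        have : t * c <= s - a by rewrite -Hq.
        lra.
      + subst t.
        move: Us; rewrite rmorph0 scale0r addr0 mul0r addr0 => Us.
        exact: (Adom d).
  apply: (Amax B); last by right.
  split => // /(_ _ Bz) Az; exact: nz' _ Az.
have [F HF] := choice Atot.
exists F; split.
- move=> r x y; apply: (Afun (rc r *: x + y)) => //.
  exact: Alin.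
- move=> m Mm; exact: (Afun m _ _ (HF m) (Aext m Mm)).
- move=> x t t0 Ux; exact: (Adom x _ t (HF x)).
Qed.
End RHB.

Local Open Scope classical_set_scope.
Local Open Scope ring_scope.

Section CHB.
Variable R : realType.
Local Notation C := (R[i] : numFieldType).
Local Notation rc := (real_complex R).
Local Notation iC := (Complex (0:R) 1 : C).

Lemma Re_le1 (w : C) : `|w| <= 1 -> complex.Re w <= 1.
Proof.
case: w => a b; rewrite normc_def /= -(rmorph1 rc) lecR => H.
apply: le_trans H.
apply: (le_trans (ler_norm a)).
rewrite -sqrtr_sqr ler_sqrt ?addr_ge0 ?sqr_ge0 //.
by rewrite lerDl sqr_ge0.
Qed.

Lemma Re_rcM (r : R) (w : C) : complex.Re (rc r * w) = r * complex.Re w.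
Proof. by case: w => a b /=; rewrite mul0r subr0. Qed.

Lemma decomp (V : tvsType C) (b : C) (x : V) :
  b *: x = rc (complex.Re b) *: x + rc (complex.Im b) *: (iC *: x).
Proof.
rewrite scalerA -scalerDl; congr (_ *: _).
case: b => b1 b2; apply/eqP; rewrite eq_complex /=; apply/andP; split; apply/eqP; ring.
Qed.


Lemma complex_hb (V : tvsType C) (Q M : set V) (h : V -> C) :
  nbhs (0:V) Q -> M 0 ->
  (forall a x y, M x -> M y -> M (a *: x + y)) ->
  (forall a x y, M x -> M y -> h (a *: x + y) = a * h x + h y) ->
  (forall m, M m -> Q m -> `|h m| <= 1) ->
  exists f : V -> C, in_dual f /\ forall m, M m -> f m = h m.
Proof.
move=> Q0 M0 Mlin hlin hb.
have [U [U0 UQ Uc Uinv]] := good_nbhd Q0.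
have Uabs : forall x, exists t, 0 < t /\ U (rc t^-1 *: x).
  move=> x; have [n Hn] := scale_small x U0.
  exists n.+1%:R; split => //.
  by rewrite fmorphV rmorph_nat.
have h0 : h 0 = 0.
  have := hlin 1 _ _ M0 M0; rewrite scale1r addr0 mul1r => e.
  by apply: (addrI (h 0)); rewrite addr0 -e.
have MZ : forall c x, M x -> M (c *: x) by move=> c x Mx; have := Mlin c _ _ Mx M0; rewrite addr0.
have hZ : forall c x, M x -> h (c *: x) = c * h x.
  by move=> c x Mx; have := hlin c _ _ Mx M0; rewrite addr0 h0 addr0.
pose u v := complex.Re (h v).
have [F [Flin Fext Fdom]] : exists F : V -> R, [/\ (forall r x y, F (rc r *: x + y) = r * F x + F y),
     (forall m, M m -> F m = u m) &
     (forall x t, 0 < t -> U (rc t^-1 *: x) -> F x <= t)].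
  apply: (real_hb Uc Uabs M0).
  - by move=> r x y Mx My; apply: Mlin.
  - move=> r x y Mx My; rewrite /u hlin //.
    by case: (h x) => a b; case: (h y) => a' b' /=; rewrite mul0r subr0.
  - move=> m t Mm t0 Um.
    have Mm' := MZ (rc t^-1) _ Mm.
    have := hb _ Mm' (UQ _ Um); rewrite hZ // => /Re_le1.
    rewrite Re_rcM /u => H.
    have -> : complex.Re (h m) = t * (t^-1 * complex.Re (h m)) by field; rewrite gt_eqF.
    by rewrite -[X in _ <= X]mulr1 ler_pM2l.
have F0 : F 0 = 0.
  have := Flin 1 0 0; rewrite scale1r addr0 mul1r => e.
  by apply: (addrI (F 0)); rewrite addr0 -e.
have Fb : forall (b : C) x y, F (b *: x + y) =
    complex.Re b * F x + complex.Im b * F (iC *: x) + F y.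
  by move=> b x y; rewrite decomp -addrA !Flin addrA.
pose f (v : V) : C := Complex (F v) (- F (iC *: v)).
have flin : forall a x y, f (a *: x + y) = a * f x + f y.
  move=> a x y; rewrite /f scalerDr scalerA !Fb.
  case: a => a1 a2; apply/eqP; rewrite eq_complex /=; apply/andP; split; apply/eqP; ring.
have f0 : f 0 = 0 by rewrite /f scaler0 F0 oppr0.
have fZ : forall c x, f (c *: x) = c * f x.
  by move=> c x; have := flin c x 0; rewrite addr0 f0 addr0.
have fB : forall x y, f (y - x) = f y - f x.
  by move=> x y; have := flin (-1) x y; rewrite scaleN1r mulN1r addrC [- _ + _]addrC.
have fbd : forall x, U x -> `|f x| <= 1.
  move=> x Ux.
  have [w0|wn0] := eqVneq (f x) 0; first by rewrite w0 normr0 ler01.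
  have nw0 : `|f x| != 0 by rewrite normr_eq0.
  pose c := (f x)^* / `|f x|.
  have c1 : `|c| = 1 by rewrite /c normrM normfV norm_conjC normr_id divff.
  have cw : c * f x = `|f x|.
    rewrite /c mulrAC -normCKC expr2 -mulrA divff // mulr1.
    done.
  have := Fdom (c *: x) 1 ltr01; rewrite invr1 rmorph1 scale1r => /(_ (Uinv _ _ c1 Ux)).
  have -> : F (c *: x) = complex.Re (f (c *: x)) by [].
  rewrite fZ cw => H.
  have Im0 : complex.Im `|f x| = 0 by apply: ger0_Im; exact: normr_ge0.
  have -> : `|f x| = rc (complex.Re `|f x|).
    by rewrite [LHS]complexE Im0 mulr0 addr0.
  by rewrite -(rmorph1 rc) lecR.
exists f; split; last first.
  move=> m Mm; rewrite /f Fext // Fext; last exact: MZ.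
  rewrite /u hZ //.
  by case: (h m) => a b /=; rewrite mul0r mul1r sub0r opprK.
split; first by move=> a x y; exact: flin.
move=> x B /nbhs_ballP [e /= e0 He].
pose k : C := 2 / e.
have k0 : 0 < k by rewrite /k divr_gt0.
have kn0 : k != 0 by rewrite gt_eqF.
have := nbhs_unshift x (nbhs0_scale k U0).
apply: filterS => y Uy /=; apply: He.
rewrite /ball /= -normrN opprB -fB.
have -> : y - x = k^-1 *: (k *: (y - x)) by rewrite scalerA mulVf ?scale1r.
rewrite fZ normrM.
apply: (le_lt_trans (ler_wpM2l (normr_ge0 _) (fbd _ Uy))).
rewrite mulr1 normfV gtr0_norm // /k invf_div.
by rewrite ltr_pdivrMr // ltr_pMr // ltr1n.
Qed.
End CHB.

Local Open Scope classical_set_scope.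
Local Open Scope ring_scope.

Section Main.
Variable R : realType.
Local Notation C := (R[i] : numFieldType).

Lemma cvgC_unique (s : nat -> C) (a b : C) : s @ \oo --> a -> s @ \oo --> b -> a = b.
Proof. move=> Ha Hb; exact: (cvg_unique (@norm_hausdorff _ C) Ha Hb). Qed.

Lemma lin_cont (E F : tvsType C) (T : E -> F) :
  (forall a x y, T (a *: x + y) = a *: T x + T y) ->
  (forall U, nbhs (0:F) U -> exists N : set E, nbhs (0:E) N /\ forall a, True -> N a -> U (T a)) ->
  continuous T.
Proof.
move=> Tlin Tc w B Bw.
have [N [N0 HN]] := Tc _ (nbhs_shift Bw).
have := nbhs_unshift w N0; apply: filterS => y Ny /=.
have := HN _ I Ny; rewrite (TB (A := setT) (fun a x y _ _ => Tlin a x y)) //.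
by rewrite addrC subrK.
Qed.


Lemma phi_delta (j : nat) : phi (delta R j).
Proof. by exists j.+1 => i ji; rewrite /delta; case: eqP => // ij; move: ji; rewrite ij ltnn. Qed.

Lemma dpq_ext (p q : nat -> nat) (x : nat -> C) (V W : tvsType C) (f : V -> C) (e : nat -> V)
   (g : W -> C) (e' : nat -> W) : (forall j, f (e j) = g (e' j)) ->
   Dpq_seq p q x f e = Dpq_seq p q x g e'.
Proof.
move=> H; apply: funext => n; rewrite /Dpq_seq; congr (_ * _).
by apply: eq_bigr => k _; apply: eq_bigr => j _; rewrite H.
Qed.

Lemma phi_closure_sub (V : tvsType C) (iota : V -> (nat -> C)) :
  (forall (a : C) (u v : V) (j : nat), iota (a *: u + v) j = a * iota u j + iota v j) ->
  forall a x y, phi_closure iota x -> phi_closure iota y -> phi_closure iota (a *: x + y).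
Proof.
move=> lin a x y /closure_tvs cx /closure_tvs cy; apply/closure_tvs => O O0.
have [Q [Q0 QO Qs]] := nbhs0_half O0.
have [s1 [[N1 H1] Hs1]] := cx _ (nbhs0_scale a Q0).
have [s2 [[N2 H2] Hs2]] := cy _ Q0.
exists (a *: s1 + s2); split.
  exists (maxn N1 N2) => j Nj; rewrite lin H1 ?H2 ?mulr0 ?addr0 //.
  - exact: leq_trans (leq_maxr _ _) Nj.
  - exact: leq_trans (leq_maxl _ _) Nj.
have -> : a *: x + y - (a *: s1 + s2) = a *: (x - s1) + (y - s2).
  by rewrite scalerBr opprD addrACA.
exact: QO.
Qed.

End Main.

Unset Implicit Arguments.
Set Strict Implicit.
Set Printing Implicit Defensive.

Theorem mainTheorem12 (R : realType) (p q : nat -> nat)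
    (hpq : forall n, (p n < q n)%N)
    (hq : forall M : nat, exists N : nat, forall n, (N <= n)%N -> (M <= q n)%N)
    (V : tvsType (R[i] : numFieldType)) (iotaX : V -> (nat -> (R[i] : numFieldType)))
    (W : tvsType (R[i] : numFieldType)) (iotaY : W -> (nat -> (R[i] : numFieldType)))
    (hX : is_FK iotaX) (hXphi : contains_phi iotaX)
    (hY : is_FK iotaY)
    (hclY : forall v : V, phi_closure iotaX v -> exists w : W, iotaY w = iotaX v)
    (hYX : forall w : W, exists v : V, iotaX v = iotaY w) :
  DpqFplus p q iotaY = DpqFplus p q iotaX.
Proof.
have [Xlin Xinj Xcont Xmetr Xcpl] := hX.
have [Ylin Yinj Ycont Ymetr Ycpl] := hY.
pose M := phi_closure iotaX.
have Mphi : forall v, phi (iotaX v) -> M v by move=> v pv; exact: subset_closure.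
have [eX HeX] := choice hXphi.
have Mlin : forall a x y, M x -> M y -> M (a *: x + y) := phi_closure_sub Xlin.
have M0 : M 0.
  have Me : M (eX 0%N) by apply: Mphi; rewrite HeX; exact: phi_delta.
  by have := Mlin (-1) _ _ Me Me; rewrite scaleN1r addNr.
have cM : closed M by exact: closed_closure.
apply/seteqP; split => x Hx f e [flin fcont] He.
-
  have [J HJ] := choice hYX.
  have Jlin : forall a w w', J (a *: w + w') = a *: J w + J w'.
    move=> a w w'; apply: Xinj; apply: funext => j.
    by rewrite HJ Ylin Xlin !HJ.
  have Jc : forall U, nbhs (0:V) U -> exists N : set W, nbhs (0:W) N /\
      forall a, setT a -> N a -> U (J a).
    apply: (closed_graph Ymetr Ycpl Xmetr Xcpl closedT) => //.
    move=> s w v _ _ sw Jsv; apply: Xinj; apply: funext => j.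
    rewrite HJ; apply: cvgC_unique (continuous_cvg _ (Ycont j w) sw) _.
    have := continuous_cvg _ (Xcont j v) Jsv.
    have -> : ((iotaX^~ j) \o (fun n => J (s n))) = ((iotaY^~ j) \o s).
      by apply: funext => n /=; rewrite HJ.
    by apply; exact: eventually_filter.
  have Jcont : continuous J.
    apply: lin_cont; first exact: Jlin.
    move=> U U0; have [Nn [Nn0 HN]] := Jc U U0.
    by exists Nn; split => // a _; apply: HN.
  have hE : forall j, exists w, iotaY w = iotaX (e j).
    by move=> j; apply: hclY; apply: Mphi; rewrite He; exact: phi_delta.
  have [eY HeY] := choice hE.
  have JeY : forall j, J (eY j) = e j by move=> j; apply: Xinj; rewrite HJ HeY.
  have gd : in_dual (f \o J).
    split; first by move=> a u v /=; rewrite Jlin flin.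
    by move=> w; apply: continuous_comp; [exact: Jcont|exact: fcont].
  have eYd : forall j, iotaY (eY j) = delta R j by move=> j; rewrite HeY He.
  have := Hx (f \o J) eY gd eYd.
  by rewrite (dpq_ext p q x (g := f \o J) (e' := eY)) // => j /=; rewrite JeY.
-
  have hK : forall v, exists w, M v -> iotaY w = iotaX v.
    move=> v; have [Mv|nMv] := pselect (M v); last by exists 0 => /nMv.
    by have [w Hw] := hclY v Mv; exists w.
  have [K HK] := choice hK.
  have Klin : forall a u v, M u -> M v -> K (a *: u + v) = a *: K u + K v.
    move=> a u v Mu Mv; apply: Yinj; apply: funext => j.
    rewrite HK; last exact: Mlin.
    by rewrite Xlin Ylin !HK.
  have Kc : forall U, nbhs (0:W) U -> exists Nn : set V, nbhs (0:V) Nn /\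
      forall a, M a -> Nn a -> U (K a).
    apply: (closed_graph Xmetr Xcpl Ymetr Ycpl cM M0 Mlin Klin).
    move=> s v w Ms Mv sv Ksw; apply: Yinj; apply: funext => j.
    rewrite HK //; apply: cvgC_unique (continuous_cvg _ (Xcont j v) sv) _.
    have := continuous_cvg _ (Ycont j w) Ksw.
    have -> : ((iotaY^~ j) \o (fun n => K (s n))) = ((iotaX^~ j) \o s).
      by apply: funext => n /=; rewrite HK.
    by apply; exact: eventually_filter.
  have f0 : f 0 = 0.
    have := flin 1 0 0; rewrite scale1r addr0 mul1r => h.
    by apply: (addrI (f 0)); rewrite addr0 -h.
  have fball : nbhs (0:W) (fun w => `|f w| <= 1).
    have nb : nbhs (f 0) (fun c : R[i] => `|c| <= 1).
      rewrite f0; apply/nbhs_ballP; exists 1 => //= c; rewrite /ball /= sub0r normrN => /ltW H; exact: H.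
    exact: (fcont 0 _ nb).
  have [Nn [Nn0 HN]] := Kc _ fball.
  have [g [gd gext]] := complex_hb (h := f \o K) Nn0 M0 Mlin
    (fun a u v Mu Mv => etrans (congr1 f (Klin a u v Mu Mv)) (flin _ _ _)) HN.
  have := Hx g eX gd HeX.
  rewrite (dpq_ext p q x (g := f) (e' := e)) // => j.
  have MeX : M (eX j) by apply: Mphi; rewrite HeX; exact: phi_delta.
  rewrite gext //=; congr f; apply: Yinj; by rewrite HK // HeX He.
Qed.
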